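(* For every $c\in(0,1]$ and Lebesgue-almost every irrational $\alpha\in(0,1)$, setting $T_n:=S(\alpha,n,\lceil cn\rceil)^{1/\lceil cn\rceil}$, we have $|T_n-T_{n+1}|\to0$ as $n\to\infty$; more precisely $|T_n-T_{n+1}|=O\!\left(\frac{\log n}{n}\right)$.
   Context: Every irrational $\alpha\in(0,1)$ has a unique continued fraction expansion $\alpha = 1/(a_1(\alpha)+1/(a_2(\alpha)+\cdots))$ with digits $a_i(\alpha)\in\mathbb{N}_{\ge1}$. For $1\le k\le n$ integers, \[ S(\alpha,n,k) := \binom{n}{k}^{-1}\sum_{1\le i_1<\cdots<i_k\le n} a_{i_1}(\alpha)\cdots a_{i_k}(\alpha). \] *)

(* Defs.v *)
From HB Require Import structures.
From mathcomp Require Import all_boot all_order all_algebra.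
From mathcomp Require Import all_classical all_reals all_analysis.
Set Implicit Arguments. Unset Strict Implicit. Unset Printing Implicit Defensive.
Import Order.TTheory GRing.Theory Num.Theory.
Local Open Scope ring_scope.

Section CF.
Variable R : realType.

Definition gauss (x : R) : R := x^-1 - (Num.floor (x^-1))%:~R.

(* i-th continued fraction digit a_i(x), i >= 1:  a_i = floor(1 / G^(i-1) x) *)
Definition cf_digit (x : R) (i : nat) : nat :=
  `|Num.floor ((iter i.-1 gauss x)^-1)|%N.

(* S(alpha,n,k) = C(n,k)^{-1} sum_{1<=i_1<...<i_k<=n} a_{i_1}...a_{i_k};
   index i : 'I_n stands for digit position i+1. *)
Definition S_cf (alpha : R) (n k : nat) : R :=
  ('C(n, k))%:R^-1 *
  \sum_(A : {set 'I_n} | #|A| == k) \prod_(i in A) ((cf_digit alpha i.+1)%:R : R).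

Definition ceil_cn (c : R) (n : nat) : nat := `|Num.ceil (c * n%:R)|%N.

Definition T_cf (c alpha : R) (n : nat) : R :=
  S_cf alpha n (ceil_cn c n) `^ ((ceil_cn c n)%:R^-1).

End CF.

(* Main.v *)
Require Import Defs.
From HB Require Import structures.
From mathcomp Require Import all_boot all_order all_algebra.
From mathcomp Require Import all_classical all_reals all_analysis.
From mathcomp Require Import ring lra zify.
Import Order.TTheory GRing.Theory Num.Theory.
Import numFieldNormedType.Exports.
Local Open Scope classical_set_scope.
Local Open Scope ring_scope.
Lemma hlp1 (R : realType) (E A N : R) : A != 0 -> N != 0 -> E / A / N = E * (N * A)^-1.
Proof. by move=> a n; field; rewrite a n. Qed.
Lemma hlp2 (R : realType) (M E A N : R) : A != 0 -> N != 0 -> M * (E / A) = (M * N * E) * (N * A)^-1.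
Proof. by move=> a n; field; rewrite a n. Qed.
Lemma hlp3 (R : realType) (X B N A K : R) : K != 0 -> N != 0 -> A != 0 -> K * B = N * A ->
  X / B = X * K * (N * A)^-1.
Proof.
move=> k n a h; have -> : B = N * A / K by rewrite -h mulrAC divff ?mul1r.
by field; rewrite k n a.
Qed.

Section Comb.
Variable R : realType.
Variable f : nat -> R.

Definition ePoly (n : nat) : {poly R} := \prod_(i < n) (f i *: 'X + 1).
Definition esym (n k : nat) : R := (ePoly n)`_k.

Lemma esym0k k : esym 0 k = (k == 0)%:R.
Proof. by rewrite /esym /ePoly big_ord0 coefC; case: k. Qed.

Lemma esymS0 n : esym n 0 = 1.
Proof.
elim: n => [|n IH]; first by rewrite esym0k.
rewrite /esym /ePoly big_ord_recr /= mulrDr mulr1 coefD -scalerAr coefZ coefMX /=.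
by rewrite mulr0 add0r; exact: IH.
Qed.

Lemma esymSS n k : esym n.+1 k.+1 = esym n k.+1 + f n * esym n k.
Proof.
rewrite /esym /ePoly big_ord_recr /= mulrDr mulr1 coefD -scalerAr coefZ coefMX /=.
by rewrite addrC.
Qed.

Lemma esym_set n k : \sum_(A : {set 'I_n} | #|A| == k) \prod_(i in A) f i = esym n k.
Proof.
rewrite /esym /ePoly.
rewrite bigA_distr.
rewrite coef_sum.
have H : forall J : {set 'I_n}, (\prod_(i < n) (if i \in J then f i *: 'X else 1))
   = (\prod_(i in J) f i) *: 'X^#|J|.
  move=> J; rewrite -big_mkcond /=.
  under eq_bigr do rewrite -mul_polyC.
  rewrite big_split /= prodr_const -mul_polyC; congr (_ * _).
  by rewrite rmorph_prod.
under [RHS]eq_bigr do rewrite H coefZ coefXn.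
rewrite [LHS]big_mkcond [RHS]big_mkcond /=.
apply: eq_bigr => J _. rewrite eq_sym; case: eqP => _; by rewrite ?mulr1 ?mulr0.
Qed.

Hypothesis hf : forall i, 1 <= f i.

Lemma prod_ge1 n : 1 <= \prod_(i < n) f i.
Proof.
elim: n => [|n IH]; first by rewrite big_ord0.
rewrite big_ord_recr /=; have := hf n; nra.
Qed.

Lemma esym_ge0 n k : 0 <= esym n k.
Proof.
elim: n k => [|n IH] k; first by rewrite esym0k ler0n.
case: k => [|k]; first by rewrite esymS0.
rewrite esymSS; have := IH k.+1; have := IH k; have := hf n; nra.
Qed.

Lemma esym_gt n k : (n < k)%N -> esym n k = 0.
Proof.
elim: n k => [|n IH] k; first by case: k => // k _; rewrite esym0k.
case: k => // k; rewrite ltnS => hk.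
by rewrite esymSS !IH ?mulr0 ?addr0 // (leq_trans hk).
Qed.

Lemma esym_geC n k : ('C(n, k))%:R <= esym n k.
Proof.
elim: n k => [|n IH] k; first by rewrite esym0k bin0n.
case: k => [|k]; first by rewrite esymS0 bin0.
rewrite esymSS binS natrD; have := IH k.+1; have := IH k; have := hf n;
  have := esym_ge0 n k; nra.
Qed.

Lemma esym_leP n k : esym n k <= ('C(n, k))%:R * \prod_(i < n) f i.
Proof.
elim: n k => [|n IH] k.
  by rewrite esym0k bin0n big_ord0 mulr1.
rewrite big_ord_recr /=.
case: k => [|k]; first by rewrite esymS0 bin0 mul1r; have := prod_ge1 n; have := hf n; nra.
rewrite esymSS binS natrD; have := IH k.+1; have := IH k; have := hf n;
  have := esym_ge0 n k; have := prod_ge1 n; have := ler0n R 'C(n, k.+1).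
set P := \prod_(i < n) f i; set a := 'C(n, k.+1)%:R; set b := 'C(n, k)%:R.
move=> ha hP he hf1 h1 h2.
have h3 : a * P <= a * P * f n.
  rewrite -[X in X <= _]mulr1; apply: ler_wpM2l => //; nra.
have h4 : f n * esym n k <= f n * (b * P) by apply: ler_wpM2l => //; lra.
lra.
Qed.

Lemma esym_P3 n k : ((n - k)%N)%:R * esym n k <= (k.+1)%:R * esym n k.+1.
Proof.
elim: n k => [|n IH] k.
  by rewrite sub0n mul0r; apply: mulr_ge0 => //; apply: esym_ge0.
case: k => [|k].
  rewrite subn0 esymS0 esymSS esymS0 mulr1 mul1r mulr1.
  have := IH 0%N; rewrite subn0 esymS0 mulr1 mul1r.
  have := hf n; rewrite -natr1; lra.
rewrite subSS.
case: (leqP n k) => hk.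
  rewrite (eqP (_ : (n - k == 0)%N)) ?subn_eq0 // mul0r.
  by apply: mulr_ge0 => //; apply: esym_ge0.
rewrite !esymSS.
have e1 : ((n - k)%N)%:R = ((n - k.+1)%N)%:R + 1 :> R.
  by rewrite natr1; congr (_%:R); lia.
have h1 := IH k.+1; have h2 := IH k.
have h3 : f n * (((n - k)%N)%:R * esym n k) <= f n * ((k.+1)%:R * esym n k.+1).
  by apply: ler_wpM2l => //; apply: le_trans (hf n).
have h4 : esym n k.+1 <= f n * esym n k.+1.
  by rewrite -[X in X <= _]mul1r; apply: ler_wpM2r => //; apply: esym_ge0.
rewrite e1 in h2 h3 *.
rewrite -?natr1 in h1 h2 h3 *.
rewrite -?natr1 in h1 h2 h3 *. 
nra.
Qed.

Lemma esym_Q4 n k (M : R) : (forall i, (i < n)%N -> f i <= M) ->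
  (k.+1)%:R * esym n k.+1 <= M * ((n - k)%N)%:R * esym n k.
Proof.
elim: n k => [|n IH] k hM.
  by rewrite esym0k mulr0 sub0n mulr0 mul0r.
have hM' : forall i, (i < n)%N -> f i <= M by move=> i hi; apply: hM; lia.
have fM : f n <= M by apply: hM.
case: k => [|k].
  rewrite subn0 esymS0 esymSS esymS0 mulr1 mul1r mulr1.
  have := IH 0%N hM'; rewrite subn0 esymS0 mulr1 mul1r.
  rewrite -natr1; lra.
rewrite subSS.
case: (leqP n k) => hk.
  rewrite (eqP (_ : (n - k == 0)%N)) ?subn_eq0 // mulr0 mul0r.
  by rewrite esym_gt ?mulr0.
rewrite !esymSS.
have e1 : ((n - k)%N)%:R = ((n - k.+1)%N)%:R + 1 :> R.
  by rewrite natr1; congr (_%:R); lia.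
have h1 := IH k.+1 hM'; have h2 := IH k hM'.
have h3 : f n * ((k.+1)%:R * esym n k.+1) <= f n * (M * ((n - k)%N)%:R * esym n k).
  by apply: ler_wpM2l => //; apply: le_trans (hf n).
have h4 : f n * esym n k.+1 <= M * esym n k.+1.
  by apply: ler_wpM2r => //; apply: esym_ge0.
rewrite e1 in h2 h3 *.
rewrite -?natr1 in h1 h2 h3 *.
rewrite -?natr1 in h1 h2 h3 *.
nra.
Qed.

Definition Sx (m j : nat) := esym m j / ('C(m, j))%:R.

Lemma Sx_ge1 m j : (j <= m)%N -> 1 <= Sx m j.
Proof.
move=> hj; have C0 : 0 < ('C(m, j))%:R :> R by rewrite ltr0n bin_gt0.
by rewrite /Sx ler_pdivlMr // mul1r esym_geC.
Qed.

Lemma Sx_leP m j : (j <= m)%N -> Sx m j <= \prod_(i < m) f i.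
Proof.
move=> hj; have C0 : 0 < ('C(m, j))%:R :> R by rewrite ltr0n bin_gt0.
by rewrite /Sx ler_pdivrMr // mulrC esym_leP.
Qed.

Lemma ratio_same n j (M : R) : (j < n)%N -> f n <= M ->
  Sx n j.+1 / (n.+1)%:R <= Sx n.+1 j.+1 <= M * Sx n j.+1.
Proof.
move=> hj fM.
have A0 : 0 < ('C(n, j.+1))%:R :> R by rewrite ltr0n bin_gt0.
have B0 : 0 < ('C(n.+1, j.+1))%:R :> R by rewrite ltr0n bin_gt0; lia.
have hB : ((n - j)%N)%:R * ('C(n.+1, j.+1))%:R = (n.+1)%:R * ('C(n, j.+1))%:R :> R.
  by rewrite -!natrM; congr (_%:R); have := mul_bin_down n.+1 j.+1; rewrite subSS /= => ->.
have nj1 : 1 <= ((n - j)%N)%:R :> R by rewrite ler1n subn_gt0.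
have nj : ((n - j)%N)%:R <= (n.+1)%:R :> R by rewrite ler_nat; lia.
have P3 := esym_P3 n j.
have e0 := esym_ge0 n j; have e1 := esym_ge0 n j.+1.
have f1 := hf n.
rewrite /Sx esymSS.
set A := ('C(n, j.+1))%:R in A0 hB *; set B := ('C(n.+1, j.+1))%:R in B0 hB *.
set E0 := esym n j in e0 P3 *; set E1 := esym n j.+1 in e1 P3 *.
set d := ((n - j)%N)%:R in hB nj1 nj P3 *; set N1 := (n.+1)%:R in hB nj *.
have N0 : 0 < N1 by rewrite /N1 ltr0n.
have D0 : 0 < (N1 * A)^-1 by rewrite invr_gt0 mulr_gt0.
have dn : d != 0 by apply: lt0r_neq0; lra.
have eS := hlp3 _ (E1 + f n * E0) _ _ _ _ dn (lt0r_neq0 N0) (lt0r_neq0 A0) hB.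
have eL := hlp1 _ E1 _ _ (lt0r_neq0 A0) (lt0r_neq0 N0).
have eR := hlp2 _ M E1 _ _ (lt0r_neq0 A0) (lt0r_neq0 N0).
rewrite eS eL eR; apply/andP; split; apply: ler_wpM2r; try exact: ltW.
- have : 0 <= f n * E0 * d by apply: mulr_ge0; [apply: mulr_ge0; lra | lra].
  have : E1 <= E1 * d by rewrite -[X in X <= _]mulr1; apply: ler_wpM2l.
  rewrite mulrDl; lra.
- have h1 : f n * (d * E0) <= f n * ((j.+1)%:R * E1) by apply: ler_wpM2l => //; lra.
  have h2 : d * E1 <= f n * d * E1.
    rewrite -[X in X <= _]mul1r mulrA; apply: ler_wpM2r => //; apply: ler_wpM2r => //; lra.
  have h3 : f n * (N1 * E1) <= M * (N1 * E1) by apply: ler_wpM2r => //; apply: mulr_ge0 => //; lra.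
  have hnj : (j.+1)%:R + d = N1 by rewrite /d /N1 -natrD; congr (_%:R); clear -hj; lia.
  have e4 : f n * ((j.+1)%:R * E1) + f n * d * E1 = f n * (N1 * E1) by rewrite -hnj; ring.
  have e5 : (E1 + f n * E0) * d = d * E1 + f n * (d * E0) by ring.
  have e6 : M * N1 * E1 = M * (N1 * E1) by ring.
  rewrite e5 e6; lra.
Qed.

Lemma ratio_next n k (M : R) : (k <= n)%N -> (forall i, (i <= n)%N -> f i <= M) ->
  Sx n k / (n.+1)%:R <= Sx n.+1 k.+1 <= M * Sx n k.
Proof.
move=> hk hM.
have A0 : 0 < ('C(n, k))%:R :> R by rewrite ltr0n bin_gt0.
have B0 : 0 < ('C(n.+1, k.+1))%:R :> R by rewrite ltr0n bin_gt0.
have hB : (k.+1)%:R * ('C(n.+1, k.+1))%:R = (n.+1)%:R * ('C(n, k))%:R :> R.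
  by rewrite -!natrM; congr (_%:R); have := mul_bin_diag n.+1 k; rewrite /= => ->.
have Q4 := esym_Q4 n k M (fun i hi => hM i (ltnW hi)).
have fM : f n <= M by apply: hM.
have e1 := esym_ge0 n k; have e2 := esym_ge0 n k.+1.
have f1 := hf n.
rewrite /Sx esymSS.
set A := ('C(n, k))%:R in A0 hB *; set B := ('C(n.+1, k.+1))%:R in B0 hB *.
set E1 := esym n k in e1 Q4 *; set E2 := esym n k.+1 in e2 Q4 *.
set d := ((n - k)%N)%:R in Q4 *; set N1 := (n.+1)%:R in hB *; set K1 := (k.+1)%:R in hB Q4 *.
have N0 : 0 < N1 by rewrite /N1 ltr0n.
have K0 : 1 <= K1 by rewrite /K1 ler1n.
have D0 : 0 < (N1 * A)^-1 by rewrite invr_gt0 mulr_gt0.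
have Kn : K1 != 0 by apply: lt0r_neq0; lra.
have eS := hlp3 _ (E2 + f n * E1) _ _ _ _ Kn (lt0r_neq0 N0) (lt0r_neq0 A0) hB.
have eL := hlp1 _ E1 _ _ (lt0r_neq0 A0) (lt0r_neq0 N0).
have eR := hlp2 _ M E1 _ _ (lt0r_neq0 A0) (lt0r_neq0 N0).
rewrite eS eL eR; apply/andP; split; apply: ler_wpM2r; try exact: ltW.
- have h1 : E1 <= f n * E1 by rewrite -[X in X <= _]mul1r; apply: ler_wpM2r.
  have h2 : f n * E1 <= f n * E1 * K1 by rewrite -[X in X <= _]mulr1; apply: ler_wpM2l => //; apply: mulr_ge0 => //; lra.
  have h3 : 0 <= E2 * K1 by apply: mulr_ge0 => //; lra.
  rewrite mulrDl; clear -h1 h2 h3; lra.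
- have h1 : f n * E1 * K1 <= M * E1 * K1.
    by apply: ler_wpM2r; [lra | apply: ler_wpM2r].
  have hnk : d + K1 = N1 by rewrite /d /K1 /N1 -natrD; congr (_%:R); clear -hk; lia.
  have e4 : M * N1 * E1 = M * d * E1 + M * E1 * K1 by rewrite -hnk; ring.
  rewrite e4 mulrDl; clear -h1 Q4; lra.
Qed.

End Comb.

Section Dyn.
Variable R : realType.
Definition Xs : set R := [set x | 0 < x < 1 /\ irrational x].

Lemma irr_inv_sub (y : R) (m : int) : irrational y -> irrational (y^-1 - m%:~R).
Proof.
move=> hy [q _ hq]; apply: hy.
exists ((q + m%:~R)^-1) => //.
by rewrite fmorphV rmorphD /= ratr_int hq subrK invrK.
Qed.

Lemma irr_neq0 (y : R) : irrational y -> y != 0.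
Proof. by move=> hy; apply/eqP => y0; apply: hy; exists 0 => //; rewrite rmorph0. Qed.

Lemma floor_inv_ge1 (y : R) : 0 < y < 1 -> 1 <= Num.floor (y^-1).
Proof.
case/andP=> y0 y1; rewrite floor_ge_int /=.
by rewrite invf_ge1 // ltW.
Qed.

Lemma gauss_X (y : R) : Xs y -> Xs (gauss y).
Proof.
case=> /andP[y0 y1] hy; rewrite /gauss; split; last exact: irr_inv_sub.
have := floor_itv (y^-1); set m := Num.floor _ => /andP[h1 h2].
rewrite intrD in h2.
apply/andP; split; last by lra.
rewrite lt_neqAle; apply/andP; split; last by lra.
rewrite eq_sym; apply/eqP => e.
have : irrational (y^-1 - m%:~R) by apply: irr_inv_sub.
by rewrite e => /irr_neq0; rewrite eqxx.
Qed.

Lemma iter_X n (x : R) : Xs x -> Xs (iter n (@gauss R) x).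
Proof. by move=> hx; elim: n => [|n IH] //=; apply: gauss_X. Qed.

Lemma digit_eq n (x : R) : Xs x ->
  ((cf_digit x n.+1)%:R : R) = (Num.floor ((iter n (@gauss R) x)^-1))%:~R.
Proof.
move=> hx; rewrite /cf_digit /= natr_absz ger0_norm //.
have [/andP[h0 h1] _] := iter_X n x hx.
by rewrite floor_ge0 invr_ge0 ltW.
Qed.

Lemma digit_ge1 n (x : R) : Xs x -> (1 <= cf_digit x n.+1)%N.
Proof.
move=> hx; have [hy _] := iter_X n x hx.
have := floor_inv_ge1 _ hy; rewrite /cf_digit /=.
by case: (Num.floor _) => // m; rewrite lez_nat.
Qed.

Lemma gauss_iterS n (x : R) : Xs x ->
  iter n.+1 (@gauss R) x = (iter n (@gauss R) x)^-1 - ((cf_digit x n.+1)%:R : R).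
Proof. by move=> hx; rewrite digit_eq //. Qed.

Lemma peel n (x u v : R) : Xs x -> 0 <= u -> u <= iter n.+1 (@gauss R) x ->
  iter n.+1 (@gauss R) x <= v ->
  ((cf_digit x n.+1)%:R + v)^-1 <= iter n (@gauss R) x <= ((cf_digit x n.+1)%:R + u)^-1.
Proof.
move=> hx u0; rewrite gauss_iterS //.
have [/andP[y0 _] _] := iter_X n x hx.
have k1 : (1 <= ((cf_digit x n.+1)%:R : R)) by rewrite ler1n digit_ge1.
set y := iter n _ x; set k := ((cf_digit x n.+1)%:R : R) => h1 h2.
have yi : 0 < y^-1 by rewrite invr_gt0.
rewrite -[X in _ <= X <= _](invrK y).
rewrite !lef_pV2 ?posrE ?invr_gt0 //; try lra.
Qed.

End Dyn.
Section Cover.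
Variable R : realType.
Local Notation lam := (@lebesgue_measure R).
Local Notation G := (@gauss R).
Local Notation Xs := (@Xs R).

Lemma eseries_bound (a : nat -> R) (C : R) : (forall k, 0 <= a k) ->
  (forall N, \sum_(k < N) a k <= C) -> (\sum_(k <oo) (a k)%:E <= C%:E)%E.
Proof.
move=> a0 hN; apply: lime_le.
  by apply: is_cvg_nneseries => n _ _; rewrite lee_fin.
by apply: nearW => N; rewrite sumEFin lee_fin big_mkord.
Qed.

Lemma union_le (B : nat -> set R) (a : nat -> R) (C : R) :
  (forall k, measurable (B k)) -> (forall k, (lam (B k) <= (a k)%:E)%E) ->
  (forall k, 0 <= a k) -> (forall N, \sum_(k < N) a k <= C) ->
  (lam (\bigcup_k B k) <= C%:E)%E.
Proof.
move=> mB hB a0 hN.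
have mU : measurable (\bigcup_k B k) by apply: bigcupT_measurable.
have := @measure_sigma_subadditive _ _ _ lam (\bigcup_k B k) B mB mU (fun _ h => h).
move/le_trans; apply.
apply: (le_trans _ (eseries_bound _ _ a0 hN)).
by apply: lee_nneseries => [k _ _|k _]; [exact: measure_ge0 | exact: hB].
Qed.

Lemma lnbase (u v : R) : 0 <= u -> u <= v -> v <= 1 ->
  v - u <= 2 * (ln (1 + v) - ln (1 + u)).
Proof.
move=> u0 uv v1.
set w := (1 + u) / (1 + v).
have hw : w * (1 + v) = 1 + u by rewrite /w divfK //; apply: lt0r_neq0; lra.
have w0 : 0 < w by rewrite /w divr_gt0 //; lra.
have e : ln (1 + u) = ln w + ln (1 + v).
  by rewrite -lnM ?posrE ?hw //; lra.
have h : ln w <= w - 1.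
  have e1 : w = 1 + (w - 1) by ring.
  rewrite {1}e1; apply: le_ln1Dx; lra.
have hw1 : w - 1 = (u - v) * (1 + v)^-1.
  by rewrite /w; field; apply: lt0r_neq0; lra.
have hp : 2^-1 <= (1 + v)^-1 :> R.
  by rewrite lef_pV2 ?posrE; lra.
have : (u - v) * (1 + v)^-1 <= (u - v) * 2^-1.
  by apply: ler_wnM2l; lra.
rewrite e; lra.
Qed.

Lemma ln1V (a : R) : 0 < a -> ln (1 + a^-1) = ln (a + 1) - ln a.
Proof.
move=> a0.
have -> : 1 + a^-1 = (a + 1) * a^-1.
  by rewrite mulrDl mulfV ?mul1r 1?addrC //; apply: lt0r_neq0.
by rewrite lnM ?posrE ?invr_gt0 ?lnV ?posrE //; lra.
Qed.

Lemma coverA n (u v : R) : 0 <= u -> u <= v -> v <= 1 ->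
  exists B : set R, [/\ measurable B,
    (forall x, Xs x -> u <= iter n G x -> iter n G x <= v -> B x) &
    (lam B <= (2 * (ln (1 + v) - ln (1 + u)))%:E)%E].
Proof.
elim: n u v => [|n IH] u v u0 uv v1.
  exists `[u, v]%classic; split => //.
  - by move=> x _ /= h1 h2; rewrite /= in_itv /= h1 h2.
  - rewrite lebesgue_measure_itv /=; case: ifP => _; rewrite ?lee_fin; last first.
      by have := lnbase _ _ u0 uv v1; lra.
    exact: lnbase.
pose uk k := ((k.+1)%:R + v)^-1 : R.
pose vk k := ((k.+1)%:R + u)^-1 : R.
have huk k : 0 <= uk k by rewrite /uk invr_ge0; have := ler0n R k.+1; lra.
have hukv k : uk k <= vk k.
  by rewrite /uk /vk lef_pV2 ?posrE; have := ler0n R k; rewrite -natr1; lra.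
have hvk k : vk k <= 1.
  by rewrite /vk invf_le1; have := ler0n R k; rewrite -natr1; lra.
have := fun k => IH (uk k) (vk k) (huk k) (hukv k) (hvk k).
move=> /boolp.choice [Bf hBf].
exists (\bigcup_k Bf k); split.
- by apply: bigcupT_measurable => k; case: (hBf k).
- move=> x hx h1 h2.
  have := peel _ _ _ _ _ hx u0 h1 h2; set d := cf_digit x n.+1 => hd.
  have d1 : (0 < d)%N by apply: digit_ge1.
  exists d.-1 => //; case: (hBf d.-1) => _ hc _; apply: hc => //;
    rewrite /uk /vk prednK //; by case/andP: hd.
- pose L (w : R) (j : nat) := ln (j%:R + 1 + w).
  pose a k := 2 * (ln (1 + vk k) - ln (1 + uk k)).
  have aE k : a k = 2 * ((L u k.+1 - L u k) - (L v k.+1 - L v k)).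
    rewrite /a /uk /vk !ln1V /L -?natr1; try (have := ler0n R k; lra).
    have e1 : k%:R + 1 + u + 1 = k%:R + 1 + 1 + u :> R by ring.
    have e2 : k%:R + 1 + v + 1 = k%:R + 1 + 1 + v :> R by ring.
    by rewrite e1 e2.
  apply: (union_le _ a).
  + by move=> k; case: (hBf k).
  + by move=> k; case: (hBf k).
  + move=> k; rewrite /a; apply: mulr_ge0 => //; rewrite subr_ge0.
    by rewrite ler_ln ?posrE; have := huk k; have := hukv k; lra.
  + move=> N.
    have hS : \sum_(k < N) a k = 2 * ((L u N - L u 0%N) - (L v N - L v 0%N)).
      elim: N => [|N IHN]; first by rewrite big_ord0; lra.
      by rewrite big_ord_recr /= IHN aE; lra.
    rewrite hS /L !add0r.
    have : ln (N%:R + 1 + u) <= ln (N%:R + 1 + v).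
      by rewrite ler_ln ?posrE; have := ler0n R N; lra.
    lra.
Qed.
End Cover.

Section SqrtSum.
Variable R : realType.

Lemma key_ab (a b : R) : 0 < a -> a <= b -> b ^+ 2 = a ^+ 2 + 1 ->
  b / (b ^+ 2) ^+ 2 <= 2 / a - 2 / b.
Proof.
move=> a0 ab hb.
have b0 : 0 < b by lra.
have e : 2 / a - 2 / b - b / (b ^+ 2) ^+ 2 = (2 * b ^+ 3 - 2 * a * b ^+ 2 - a) / (a * b ^+ 3).
  by field; apply/andP; split; apply: lt0r_neq0.
have hN : 0 <= 2 * b ^+ 3 - 2 * a * b ^+ 2 - a.
  have e2 : 2 * b ^+ 3 - 2 * a * b ^+ 2 - a = (b - a) ^+ 2 * (2 * b + a) + a * (b ^+ 2 - a ^+ 2 - 1).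
    ring.
  rewrite e2 hb.
  have : 0 <= (b - a) ^+ 2 * (2 * b + a) by apply: mulr_ge0; [apply: sqr_ge0 | lra].
  have -> : a ^+ 2 + 1 - a ^+ 2 - 1 = 0 by ring.
  by rewrite mulr0 addr0.
have : 0 <= (2 * b ^+ 3 - 2 * a * b ^+ 2 - a) / (a * b ^+ 3).
  by apply: divr_ge0 => //; apply: mulr_ge0; [lra | apply: exprn_ge0; lra].
rewrite -e; lra.
Qed.

Definition wk (k : nat) : R := Num.sqrt ((k.+1)%:R) / ((k.+1)%:R) ^+ 2.

Lemma wk_ge0 k : 0 <= wk k.
Proof. by rewrite /wk divr_ge0 ?sqrtr_ge0 ?exprn_ge0. Qed.

Lemma wsum_le N : \sum_(k < N.+1) wk k <= 3 - 2 / Num.sqrt ((N.+1)%:R).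
Proof.
elim: N => [|N IH].
  by rewrite big_ord_recr big_ord0 /wk /= sqrtr1 expr1n !divr1; lra.
rewrite big_ord_recr /=.
set a := Num.sqrt ((N.+1)%:R) in IH *; set b := Num.sqrt ((N.+2)%:R).
have a0 : 0 < a by rewrite sqrtr_gt0 ltr0n.
have ab : a <= b by rewrite ler_sqrt ?ler_nat.
have hb : b ^+ 2 = a ^+ 2 + 1 by rewrite !sqr_sqrtr ?ler0n // -natr1.
have hw : wk N.+1 = b / (b ^+ 2) ^+ 2 by rewrite /wk sqr_sqrtr ?ler0n.
have := key_ab _ _ a0 ab hb; rewrite -hw; lra.
Qed.

Lemma wsum_le3 N : \sum_(k < N) wk k <= 3.
Proof.
case: N => [|N]; first by rewrite big_ord0.
apply: le_trans (wsum_le N) _.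
have : 0 <= 2 / Num.sqrt ((N.+1)%:R) :> R by apply: divr_ge0; [lra | apply: sqrtr_ge0].
lra.
Qed.
End SqrtSum.

Section CoverB.
Variable R : realType.
Local Notation lam := (@lebesgue_measure R).
Local Notation G := (@gauss R).
Local Notation Xs := (@Xs R).

Definition Pi (x : R) n := \prod_(i < n) ((cf_digit x i.+1)%:R : R).

Lemma coverB n (u v t : R) : 0 <= u -> u <= v -> v <= 1 -> 0 < t ->
  exists B : set R, [/\ measurable B,
    (forall x, Xs x -> t <= Pi x n -> u <= iter n G x -> iter n G x <= v -> B x) &
    (lam B <= (3 ^+ n * (v - u) / Num.sqrt t)%:E)%E].
Proof.
elim: n u v t => [|n IH] u v t u0 uv v1 t0.
  have s0 : 0 < Num.sqrt t by rewrite sqrtr_gt0.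
  case: (leP t 1) => t1.
    have s1 : Num.sqrt t <= 1 by rewrite -sqrtr1 ler_sqrt.
    have hq : v - u <= 1 * (v - u) / Num.sqrt t.
      by rewrite mul1r ler_pdivlMr //; nra.
    exists `[u, v]%classic; split => //.
    - by move=> x _ _ /= h1 h2; rewrite /= in_itv /= h1 h2.
    - rewrite expr0 lebesgue_measure_itv /=; case: ifP => _; rewrite ?lee_fin //.
      by apply: divr_ge0; lra.
  exists set0; split => //.
  - by move=> x _; rewrite /Pi big_ord0; lra.
  - by rewrite measure0 lee_fin expr0 mul1r; apply: divr_ge0; lra.
pose uk k := ((k.+1)%:R + v)^-1 : R.
pose vk k := ((k.+1)%:R + u)^-1 : R.
pose tk k := t / (k.+1)%:R.
have huk k : 0 <= uk k by rewrite /uk invr_ge0; have := ler0n R k.+1; lra.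
have hukv k : uk k <= vk k.
  by rewrite /uk /vk lef_pV2 ?posrE; have := ler0n R k; rewrite -natr1; lra.
have hvk k : vk k <= 1.
  by rewrite /vk invf_le1; have := ler0n R k; rewrite -natr1; lra.
have htk k : 0 < tk k by rewrite /tk divr_gt0.
have := fun k => IH (uk k) (vk k) (tk k) (huk k) (hukv k) (hvk k) (htk k).
move=> /boolp.choice [Bf hBf].
exists (\bigcup_k Bf k); split.
- by apply: bigcupT_measurable => k; case: (hBf k).
- move=> x hx hP h1 h2.
  have := peel _ _ _ _ _ hx u0 h1 h2; set d := cf_digit x n.+1 => hd.
  have d1 : (0 < d)%N by apply: digit_ge1.
  exists d.-1 => //; case: (hBf d.-1) => _ hc _; apply: hc => //;
    rewrite /uk /vk /tk prednK //; try by case/andP: hd.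
  rewrite ler_pdivrMr ?ltr0n //.
  by move: hP; rewrite /Pi big_ord_recr.
- set c := 3 ^+ n * (v - u) / Num.sqrt t.
  have c0 : 0 <= c by rewrite /c; apply: divr_ge0; [apply: mulr_ge0; [apply: exprn_ge0|]; lra | apply: sqrtr_ge0].
  have -> : 3 ^+ n.+1 * (v - u) / Num.sqrt t = c * 3 by rewrite /c exprS; ring.
  apply: (union_le _ _ (fun k => c * wk R k)).
  + by move=> k; case: (hBf k).
  + move=> k; case: (hBf k) => _ _ hm; apply: le_trans hm _; rewrite lee_fin.
    set s := Num.sqrt t; set r := Num.sqrt ((k.+1)%:R : R).
    have s0 : 0 < s by rewrite sqrtr_gt0.
    have r0 : 0 < r by rewrite sqrtr_gt0 ltr0n.
    have hst : Num.sqrt (tk k) = s / r.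
      apply: (mulIf (lt0r_neq0 r0)); rewrite divfK ?lt0r_neq0 // -sqrtrM.
        by rewrite /tk divfK // lt0r_neq0 // ltr0n.
      by apply: ltW.
    have hr2 : r ^+ 2 = (k.+1)%:R by rewrite sqr_sqrtr ?ler0n.
    have hdiff : vk k - uk k <= (v - u) / ((k.+1)%:R ^+ 2).
      rewrite /uk /vk.
      have k0 : 0 < (k.+1)%:R :> R by rewrite ltr0n.
      have e : ((k.+1)%:R + u)^-1 - ((k.+1)%:R + v)^-1 = (v - u) / (((k.+1)%:R + u) * ((k.+1)%:R + v)).
        by field; apply/andP; split; apply: lt0r_neq0; lra.
      rewrite e; apply: ler_wpM2l; first lra.
      rewrite lef_pV2 ?posrE; first by rewrite expr2; apply: ler_pM; lra.
        by apply: mulr_gt0; lra.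
      by apply: exprn_gt0.
    rewrite hst /wk /c -/r -hr2.
    have hd0 : 0 <= vk k - uk k by have := hukv k; lra.
    have : 3 ^+ n * (vk k - uk k) <= 3 ^+ n * ((v - u) / (r ^+ 2) ^+ 2).
      by apply: ler_wpM2l; [apply: exprn_ge0 | rewrite hr2].
    move=> h.
    have e1 : 3 ^+ n * (vk k - uk k) / (s / r) = (3 ^+ n * (vk k - uk k)) * (r / s).
      by field; apply/andP; split; apply: lt0r_neq0.
    have e2 : 3 ^+ n * (v - u) / s * (r / (r ^+ 2) ^+ 2) = (3 ^+ n * ((v - u) / (r ^+ 2) ^+ 2)) * (r / s).
      by field; apply/andP; split; apply: lt0r_neq0.
    rewrite e1 e2; apply: ler_wpM2r => //.
    by apply: divr_ge0; apply: ltW.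
  + by move=> k; apply: mulr_ge0 => //; apply: wk_ge0.
  + move=> N; rewrite -mulr_sumr; apply: ler_wpM2l => //; exact: wsum_le3.
Qed.
End CoverB.

Section Final.
Variable R : realType.

Lemma Kreal (c : R) m : 0 < c -> ((ceil_cn c m)%:R : R) = (Num.ceil (c * m%:R))%:~R.
Proof.
move=> c0; rewrite /ceil_cn natr_absz ger0_norm // ceil_ge0.
have : 0 <= c * m%:R by apply: mulr_ge0; [lra | apply: ler0n].
lra.
Qed.

Lemma K_le (c : R) m : 0 < c -> c <= 1 -> (ceil_cn c m <= m)%N.
Proof.
move=> c0 c1; rewrite -(ler_nat R) Kreal //.
have : Num.ceil (c * m%:R) <= m%:Z.
  rewrite ceil_le_int; have := ler0n R m; nra.
by rewrite -(ler_int R).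
Qed.

Lemma K_ge (c : R) m : 0 < c -> c * m%:R <= (ceil_cn c m)%:R.
Proof. by move=> c0; rewrite Kreal // ceil_ge. Qed.

Lemma K_pos (c : R) m : 0 < c -> (0 < m)%N -> (0 < ceil_cn c m)%N.
Proof.
move=> c0 m0; rewrite -(ltr_nat R).
apply: lt_le_trans (K_ge c m c0); apply: mulr_gt0 => //; by rewrite ltr0n.
Qed.

Lemma K_step (c : R) m : 0 < c -> c <= 1 ->
  ceil_cn c m.+1 = ceil_cn c m \/ ceil_cn c m.+1 = (ceil_cn c m).+1.
Proof.
move=> c0 c1.
have h1 : Num.ceil (c * m%:R) <= Num.ceil (c * m.+1%:R).
  by apply: le_ceil; apply: ler_wpM2l; [lra | rewrite ler_nat].
have h2 : Num.ceil (c * m.+1%:R) <= Num.ceil (c * m%:R) + 1.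
  rewrite ceil_le_int intrD; have := ceil_ge (c * m%:R); rewrite -natr1; lra.
have g0 : 0 <= Num.ceil (c * m%:R).
  rewrite ceil_ge0; have : 0 <= c * m%:R by apply: mulr_ge0; [lra | apply: ler0n].
  lra.
rewrite /ceil_cn; move: h1 h2 g0.
set a := Num.ceil _; set b := Num.ceil _.
lia.
Qed.

Lemma expR_diff (a b E : R) : a <= E -> b <= E -> `|expR a - expR b| <= expR E * `|a - b|.
Proof.
wlog ab : a b / a <= b.
  move=> H aE bE; case: (leP a b) => h; first exact: H.
  by rewrite distrC [`|a - b|]distrC; apply: H => //; apply: ltW.
move=> aE bE.
rewrite distrC [`|a - b|]distrC !ger0_norm ?subr_ge0 ?ler_expR //.
have h1 := expR_ge1Dx (a - b).
have e : expR b - expR a = expR b * (1 - expR (a - b)).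
  by rewrite mulrBr mulr1 expRD expRN mulrCA divff ?mulr1 // gt_eqF ?expR_gt0.
rewrite e; apply: le_trans (_ : expR b * (b - a) <= _).
  by apply: ler_wpM2l; [apply: ltW; apply: expR_gt0 | lra].
by apply: ler_wpM2r; [lra | rewrite ler_expR].
Qed.

Definition fdig (x : R) := fun i : nat => ((cf_digit x i.+1)%:R : R).

Lemma S_Sx (x : R) m k : S_cf x m k = Sx R (fdig x) m k.
Proof. by rewrite /S_cf /Sx -esym_set mulrC. Qed.

Lemma T_exp (c x : R) m : 0 < c -> c <= 1 -> Xs R x ->
  T_cf c x m = expR ((ceil_cn c m)%:R^-1 * ln (Sx R (fdig x) m (ceil_cn c m))).
Proof.
move=> c0 c1 hx.
have hf : forall i, 1 <= fdig x i by move=> i; rewrite /fdig ler1n digit_ge1.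
have := Sx_ge1 _ _ hf _ _ (K_le c m c0 c1).
by rewrite /T_cf S_Sx /powR; case: ifP => // /eqP ->; rewrite ler10.
Qed.

Lemma det (c x : R) (n0 : nat) : 0 < c -> c <= 1 -> Xs R x ->
  (forall j, (n0 <= j)%N -> fdig x j <= ((j.+1)%:R) ^+ 2) ->
  (forall j, (n0 <= j)%N -> Pi R x j <= 16 ^+ j) ->
  exists C : R, exists N : nat, forall m : nat, (N <= m)%N ->
    `|T_cf c x m - T_cf c x m.+1| <= C * (ln (m%:R : R) / m%:R).
Proof.
move=> c0 c1 hx hA hB.
set f := fdig x.
have hf : forall i, 1 <= f i by move=> i; rewrite /f /fdig ler1n digit_ge1.
have [K0 [K01 hK0]] : exists K0 : R, 1 <= K0 /\ forall i, (i < n0)%N -> f i <= K0.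
  elim: (n0) => [|n IH]; first by exists 1; split => //.
  case: IH => K [K1 hK]; exists (K + f n); split; first by have := hf n; lra.
  move=> i; rewrite ltnS leq_eqVlt => /orP[/eqP ->|hi]; first by have := hf n; lra.
  by have := hK i hi; have := hf n; lra.
have fb : forall m i, (n0 <= m)%N -> (i <= m)%N -> f i <= K0 * ((m.+1)%:R) ^+ 2.
  move=> m i hm him.
  have m1 : 1 <= ((m.+1)%:R : R) ^+ 2 by rewrite expr_ge1 // ler1n.
  case: (ltnP i n0) => hi.
    by apply: le_trans (hK0 i hi) _; rewrite -[X in X <= _]mulr1 ler_wpM2l //; lra.
  apply: le_trans (hA i hi) _.
  have : ((i.+1)%:R : R) ^+ 2 <= ((m.+1)%:R) ^+ 2.
    by rewrite lerXn2r ?nnegrE ?ler0n // ler_nat.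
  have : ((m.+1)%:R : R) ^+ 2 <= K0 * ((m.+1)%:R) ^+ 2.
    by rewrite -[X in X <= _]mul1r ler_wpM2r //; lra.
  lra.
set K := ceil_cn c.
set S := fun m => Sx R f m (K m).
set L16 := ln (16 : R).
have L16p : 0 < L16 by rewrite ln_gt0 // ltr1n.
have Sge1 : forall m, 1 <= S m by move=> m; apply: Sx_ge1 => //; apply: K_le.
have Spos : forall m, 0 < S m by move=> m; have := Sge1 m; lra.
have Sle : forall m, (n0 <= m)%N -> ln (S m) <= m%:R * L16.
  move=> m hm; rewrite mulr_natl /L16 -lnXn ?ltr0n //.
  rewrite ler_ln ?posrE ?exprn_gt0 ?ltr0n //.
  apply: le_trans (hB m hm); exact: Sx_leP (K_le c m c0 c1).
have Lge0 : forall m, 0 <= ln (S m) by move=> m; apply: ln_ge0.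
have Kr : forall m, (0 < m)%N -> c * m%:R <= (K m)%:R /\ 0 < ((K m)%:R : R).
  move=> m m0; split; first exact: K_ge.
  by rewrite ltr0n; apply: K_pos.
set tau := fun m => (K m)%:R^-1 * ln (S m).
have tau_b : forall m, (n0 <= m)%N -> (0 < m)%N -> 0 <= tau m <= L16 / c.
  move=> m hm m0; have [kc k0] := Kr m m0.
  apply/andP; split; first by apply: mulr_ge0 => //; rewrite invr_ge0 ltW.
  rewrite /tau mulrC ler_pdivrMr //.
  have h1 : L16 / c * (c * m%:R) <= L16 / c * (K m)%:R.
    by apply: ler_wpM2l => //; apply: divr_ge0; lra.
  have h2 : L16 / c * (c * m%:R) = m%:R * L16 by field; apply: lt0r_neq0.
  have := Sle m hm; lra.
have dL : forall m, (n0 <= m)%N -> (0 < m)%N ->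
    `|ln (S m.+1) - ln (S m)| <= ln (m.+1)%:R + ln (K0 * ((m.+1)%:R) ^+ 2).
  move=> m hm m0.
  set Mb := K0 * ((m.+1)%:R) ^+ 2.
  have Mb1 : 1 <= Mb.
    rewrite /Mb; have : 1 <= ((m.+1)%:R : R) ^+ 2 by rewrite expr_ge1 // ler1n.
    nra.
  have hr : S m / (m.+1)%:R <= S m.+1 <= Mb * S m.
    have kl := K_le c m c0 c1.
    case: (K_step c m c0 c1) => hK.
    - have kp := K_pos c m c0 m0.
      rewrite /S /K hK -(prednK kp).
      apply: ratio_same => //; first by rewrite prednK.
      exact: fb.
    - rewrite /S /K hK; apply: ratio_next => //.
      by move=> i hi; apply: fb.
  case/andP: hr => hr1 hr2.
  have N0 : 0 < ((m.+1)%:R : R) by rewrite ltr0n.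
  have l1 : ln (S m) - ln (m.+1)%:R <= ln (S m.+1).
    rewrite -lnV ?posrE // -lnM ?posrE ?invr_gt0 //.
    by rewrite ler_ln ?posrE ?(divr_gt0 (Spos m) N0) ?Spos.
  have Mb0 : 0 < Mb by lra.
  have l2 : ln (S m.+1) <= ln Mb + ln (S m).
    rewrite -lnM ?posrE ?Mb0 ?Spos //.
    by rewrite ler_ln ?posrE ?(mulr_gt0 Mb0 (Spos m)) ?Spos.
  have : 0 <= ln ((m.+1)%:R : R) by apply: ln_ge0; rewrite ler1n.
  have : 0 <= ln Mb by apply: ln_ge0.
  rewrite ler_norml; move=> *; apply/andP; split; lra.
have dtau : forall m, (n0 <= m)%N -> (0 < m)%N ->
    `|tau m.+1 - tau m| <= (K m)%:R^-1 * ((ln (m.+1)%:R + ln (K0 * ((m.+1)%:R) ^+ 2)) + L16 / c).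
  move=> m hm m0.
  have [kc k0] := Kr m m0.
  have tb := tau_b m hm m0.
  have dl := dL m hm m0.
  move: dl; rewrite ler_norml => /andP[dl1 dl2].
  have p0 : 0 < (K m)%:R^-1 :> R by rewrite invr_gt0.
  case: (K_step c m c0 c1) => hK.
  - rewrite /tau /K hK -/(K m) -mulrBr normrM ger0_norm; last exact: ltW.
    apply: ler_wpM2l; first exact: ltW.
    rewrite ler_norml; apply/andP; split; have : 0 <= L16 / c by apply: divr_ge0; lra.
      by lra.
    by lra.
  - have e1 : tau m.+1 = ((K m)%:R + 1)^-1 * ln (S m.+1).
      by rewrite /tau /K hK -/(K m) -natr1.
    rewrite e1.
    have q0 : 0 < ((K m)%:R + 1)^-1 :> R by rewrite invr_gt0; lra.
    have qp : ((K m)%:R + 1)^-1 <= (K m)%:R^-1 :> R by rewrite lef_pV2 ?posrE; lra.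
    have eqp : (K m)%:R^-1 - ((K m)%:R + 1)^-1 = (K m)%:R^-1 * ((K m)%:R + 1)^-1 :> R.
      by field; apply/andP; split; apply: lt0r_neq0; lra.
    set p := (K m)%:R^-1 in p0 qp eqp tb *; set q := ((K m)%:R + 1)^-1 in q0 qp eqp *.
    rewrite /tau -/p in tb.
    move: tb => /andP[tb1 tb2].
    have a1 : q * (ln (S m.+1) - ln (S m)) <= q * (ln (m.+1)%:R + ln (K0 * ((m.+1)%:R) ^+ 2)).
      by apply: ler_wpM2l; [lra | ].
    have a2 : q * (- (ln (m.+1)%:R + ln (K0 * ((m.+1)%:R) ^+ 2))) <= q * (ln (S m.+1) - ln (S m)).
      by apply: ler_wpM2l; [lra | ].
    have a3 : q * (p * ln (S m)) <= q * (L16 / c) by apply: ler_wpM2l; lra.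
    have a4 : 0 <= q * (p * ln (S m)) by apply: mulr_ge0; lra.
    have Q0 : 0 <= (ln (m.+1)%:R + ln (K0 * ((m.+1)%:R) ^+ 2)) + L16 / c.
      have : 0 <= L16 / c by apply: divr_ge0; lra.
      have : 0 <= ln (m.+1)%:R + ln (K0 * ((m.+1)%:R) ^+ 2) :> R by move: dl1 dl2; lra.
      lra.
    have a5 : q * ((ln (m.+1)%:R + ln (K0 * ((m.+1)%:R) ^+ 2)) + L16 / c) <=
              p * ((ln (m.+1)%:R + ln (K0 * ((m.+1)%:R) ^+ 2)) + L16 / c).
      by apply: ler_wpM2r.
    have eid : q * ln (S m.+1) - p * ln (S m) = q * (ln (S m.+1) - ln (S m)) - q * (p * ln (S m)).
      have : p * ln (S m) - q * ln (S m) = q * (p * ln (S m)) by rewrite -mulrBl eqp; ring.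
      lra.
    rewrite eid ler_norml; apply/andP; split.
      by move: a2 a4 a3 a5; rewrite !mulrDr !mulrN; lra.
    by move: a1 a4 a5; rewrite !mulrDr; lra.
set E := expR (L16 / c).
have l3 : 0 < ln (3 : R) by rewrite ln_gt0 // ltr1n.
have lK0 : 0 <= ln K0 by apply: ln_ge0.
set A := ln K0 + L16 / c.
have L0 : 0 <= L16 / c by apply: divr_ge0; lra.
have A0 : 0 <= A by rewrite /A; lra.
exists (E / c * (6 + A / ln 3)), (n0 + 3)%N => m hm.
have hm0 : (n0 <= m)%N by lia.
have m0 : (0 < m)%N by lia.
have m3 : (3 <= m)%N by lia.
have [kc k0] := Kr m m0.
have tb0 := tau_b m hm0 m0.
have tb1 := tau_b m.+1 (leq_trans hm0 (leqnSn m)) isT.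
rewrite (T_exp c x m c0 c1 hx) (T_exp c x m.+1 c0 c1 hx) -/f.
rewrite -/(K m) -/(K m.+1) -/(S m) -/(S m.+1) -/(tau m) -/(tau m.+1).
have h1 : `|expR (tau m) - expR (tau m.+1)| <= E * `|tau m - tau m.+1|.
  by apply: expR_diff; [case/andP: tb0 | case/andP: tb1].
apply: le_trans h1 _.
rewrite distrC.
have mr : (3 : R) <= m%:R by rewrite (ler_nat R 3).
have lm0 : ln (3 : R) <= ln (m%:R : R) by rewrite ler_ln ?posrE ?ltr0n //; lra.
have lm1 : ln ((m.+1)%:R : R) <= 2 * ln (m%:R : R).
  have : ln ((m.+1)%:R : R) <= ln (m%:R * m%:R : R).
    rewrite ler_ln ?posrE ?mulr_gt0 ?ltr0n //.
    rewrite -natr1; nra.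
  rewrite lnM ?posrE ?ltr0n //; lra.
have eD : ln (K0 * ((m.+1)%:R) ^+ 2) = ln K0 + 2 * ln ((m.+1)%:R : R).
  rewrite lnM ?posrE ?exprn_gt0 ?ltr0n //; last lra.
  by rewrite expr2 lnM ?posrE ?ltr0n //; lra.
have hQ : (ln (m.+1)%:R + ln (K0 * ((m.+1)%:R) ^+ 2)) + L16 / c <= (6 + A / ln 3) * ln (m%:R : R).
  rewrite eD.
  have : A <= A / ln 3 * ln (m%:R : R).
    rewrite mulrAC ler_pdivlMr //.
    by apply: ler_wpM2l.
  rewrite /A; lra.
have dt := dtau m hm0 m0.
have kinv : (K m)%:R^-1 <= (c * m%:R)^-1 :> R.
  by rewrite lef_pV2 ?posrE // mulr_gt0 // ltr0n.
have E0 : 0 < E by apply: expR_gt0.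
have cm0 : 0 < c * m%:R by rewrite mulr_gt0 // ltr0n.
apply: le_trans (_ : E * ((c * m%:R)^-1 * ((6 + A / ln 3) * ln (m%:R : R))) <= _).
  apply: ler_wpM2l; first exact: ltW.
  apply: le_trans dt _.
  have Q0 : 0 <= (ln (m.+1)%:R + ln (K0 * ((m.+1)%:R) ^+ 2)) + L16 / c.
    rewrite eD; have : 0 <= L16 / c by apply: divr_ge0; lra.
    have : 0 <= ln ((m.+1)%:R : R) by apply: ln_ge0; rewrite ler1n.
    lra.
  apply: le_trans (_ : (c * m%:R)^-1 * ((ln (m.+1)%:R + ln (K0 * ((m.+1)%:R) ^+ 2)) + L16 / c) <= _).
    by apply: ler_wpM2r.
  by apply: ler_wpM2l => //; rewrite invr_ge0 ltW.
rewrite le_eqVlt; apply/orP; left; apply/eqP; field.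
by apply/and3P; split; apply: lt0r_neq0 => //; rewrite ltr0n.
Qed.
Lemma lnm_le (m : nat) : (0 < m)%N -> ln (m%:R : R) / m%:R <= 2 / Num.sqrt (m%:R).
Proof.
move=> m0.
have mp : 0 < (m%:R : R) by rewrite ltr0n.
set s := Num.sqrt (m%:R : R).
have s0 : 0 < s by rewrite sqrtr_gt0.
have ss : s * s = m%:R by rewrite -expr2 sqr_sqrtr ?ler0n.
have hl : ln (m%:R : R) = ln s + ln s by rewrite -ss lnM ?posrE.
have hs : ln s <= s - 1.
  have e1 : s = 1 + (s - 1) by ring.
  rewrite {1}e1; apply: le_ln1Dx; lra.
rewrite hl -ss ler_pdivrMr ?mulr_gt0 //.
have -> : 2 / s * (s * s) = 2 * s by field; apply: lt0r_neq0.
lra.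
Qed.

Lemma cvg0_bound (g : nat -> R) (C : R) (N : nat) : (forall m, 0 <= g m) ->
  (forall m, (N <= m)%N -> g m <= C * (ln (m%:R : R) / m%:R)) -> g @ \oo --> (0 : R).
Proof.
move=> g0 hg; apply/cvgrPdist_le => e e0.
set C' := `|C| + 1.
have C'0 : 0 < C' by rewrite /C'; have := normr_ge0 C; lra.
set M0 := `|Num.ceil ((2 * C' / e) ^+ 2)|%N.
exists (N + M0.+1)%N => // m /= hm.
have m0 : (0 < m)%N by lia.
have mp : 0 < (m%:R : R) by rewrite ltr0n.
rewrite sub0r normrN ger0_norm //.
apply: le_trans (hg m (leq_trans (leq_addr _ _) hm)) _.
have lm0 : 0 <= ln (m%:R : R) / m%:R.
  apply: divr_ge0; last exact: ltW.
  by apply: ln_ge0; rewrite ler1n.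
have h1 : C * (ln (m%:R : R) / m%:R) <= C' * (ln (m%:R : R) / m%:R).
  apply: ler_wpM2r => //; rewrite /C'; have := ler_norm C; lra.
apply: le_trans h1 _.
apply: le_trans (_ : C' * (2 / Num.sqrt (m%:R)) <= _).
  by apply: ler_wpM2l; [lra | apply: lnm_le].
set s := Num.sqrt (m%:R : R).
have s0 : 0 < s by rewrite sqrtr_gt0.
have hM : (2 * C' / e) ^+ 2 <= m%:R.
  apply: le_trans (ceil_ge _) _.
  have : (Num.ceil ((2 * C' / e) ^+ 2))%:~R = (M0%:R : R).
    rewrite /M0 natr_absz ger0_norm // ceil_ge0.
    have : 0 <= (2 * C' / e) ^+ 2 by apply: sqr_ge0.
    lra.
  move=> ->; rewrite ler_nat; lia.
have hs : 2 * C' / e <= s.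
  have q0 : 0 <= 2 * C' / e by apply: divr_ge0; lra.
  have eq : 2 * C' / e = Num.sqrt ((2 * C' / e) ^+ 2) by rewrite sqrtr_sqr ger0_norm.
  by rewrite eq /s ler_sqrt.
rewrite mulrA ler_pdivrMr //.
by move: hs; rewrite ler_pdivrMr //; lra.
Qed.
End Final.
Lemma sum_vA (R : realType) N : \sum_(k < N) (((k.+1)%:R : R) ^+ 2)^-1 <= 2.
Proof.
suff H : forall N, \sum_(k < N.+1) (((k.+1)%:R : R) ^+ 2)^-1 <= 2 - ((N.+1)%:R)^-1.
  case: N => [|N]; first by rewrite big_ord0.
  apply: le_trans (H N) _; have : 0 <= ((N.+1)%:R : R)^-1 by rewrite invr_ge0 ler0n.
  by move=> h; rewrite lerBlDr lerDl.
clear N; elim=> [|N IH].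
  by rewrite big_ord_recr big_ord0 /= expr1n invr1; lra.
rewrite big_ord_recr /=.
have [a ha] : {a : R | a = (N.+1)%:R} by exists (N.+1)%:R.
rewrite -ha in IH.
have a1 : 1 <= a by rewrite ha ler1n.
have e : ((N.+2)%:R : R) = a + 1 by rewrite ha -natr1.
rewrite e.
have h : ((a + 1) ^+ 2)^-1 <= a^-1 - (a + 1)^-1.
  have e2 : a^-1 - (a + 1)^-1 - ((a + 1) ^+ 2)^-1 = (a * (a + 1) ^+ 2)^-1.
    by field; apply/andP; split; apply: lt0r_neq0; lra.
  have : 0 <= (a * (a + 1) ^+ 2)^-1 by rewrite invr_ge0; apply: mulr_ge0; [lra | apply: sqr_ge0].
  lra.
lra.
Qed.

Lemma sum_geo (R : realType) N : \sum_(k < N) ((3 / 4 : R) ^+ k) <= 4.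
Proof.
suff H : forall N, \sum_(k < N) ((3 / 4 : R) ^+ k) = 4 - 4 * (3 / 4) ^+ N.
  rewrite H; have : 0 <= (3 / 4 : R) ^+ N by apply: exprn_ge0; lra.
  lra.
clear N; elim=> [|N IH]; first by rewrite big_ord0 expr0; lra.
by rewrite big_ord_recr /= IH exprSr; lra.
Qed.

Theorem lemma3p8 (R : realType) (c : R) (hc0 : 0 < c) (hc1 : c <= 1) :
  {ae (@lebesgue_measure R), forall alpha : R,
     0 < alpha < 1 -> @irrational R alpha ->
     ((fun n : nat => `|T_cf c alpha n - T_cf c alpha n.+1|) @ \oo --> (0 : R)) /\
     (exists C : R, exists N : nat, forall n : nat, (N <= n)%N ->
        `|T_cf c alpha n - T_cf c alpha n.+1| <= C * (ln (n%:R : R) / n%:R))}.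
Proof.
pose vA := fun n : nat => (((n.+1)%:R : R) ^+ 2)^-1.
have vA0 : forall n, 0 < vA n by move=> n; rewrite /vA invr_gt0 exprn_gt0 // ltr0n.
have vA1 : forall n, vA n <= 1 by move=> n; rewrite /vA invf_le1 ?exprn_gt0 ?ltr0n // expr_ge1 // ler1n.
have hA := fun n => coverA R n 0 (vA n) (lexx 0) (ltW (vA0 n)) (vA1 n).
have hB := fun n => coverB R n 0 1 (16 ^+ n) (lexx 0) ler01 (lexx 1) (exprn_gt0 n (ltr0n R 16)).
move: hA => /boolp.choice [EA hEA].
move: hB => /boolp.choice [EB hEB].
pose F := fun n => EA n `|` EB n.
have mF : forall n, measurable (F n).
  by move=> n; apply: measurableU; [case: (hEA n) | case: (hEB n)].
pose a := fun n => 2 * vA n + (3 / 4 : R) ^+ n.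
have a0 : forall n, 0 <= a n.
  by move=> n; apply: addr_ge0; [apply: mulr_ge0; [lra | apply: ltW] | apply: exprn_ge0; lra].
have hF : forall n, (lebesgue_measure (F n) <= (a n)%:E)%E.
  move=> n; apply: le_trans (measureU2 _ _ _) _; [case: (hEA n) | case: (hEB n) |] => //.
  rewrite /a EFinD; apply: leeD.
  - case: (hEA n) => _ _ h; apply: le_trans h _; rewrite lee_fin addr0 ln1 subr0.
    apply: ler_wpM2l; first lra.
    by apply: le_ln1Dx; have := vA0 n; lra.
  - case: (hEB n) => _ _ h; apply: le_trans h _; rewrite lee_fin subr0 mulr1.
    have e16 : (16 : R) ^+ n = (4 ^+ n) ^+ 2.
      by rewrite -exprM mulnC exprM expr2 -natrM.
    rewrite e16 sqrtr_sqr ger0_norm ?exprn_ge0 // expr_div_n //.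
have hsum : forall N, \sum_(k < N) a k <= 8.
  move=> N; rewrite /a big_split /= -mulr_sumr.
  have := sum_vA R N; have := sum_geo R N; rewrite /vA; lra.
have hfin : (\sum_(n <oo) lebesgue_measure (F n) < +oo)%E.
  apply: (@le_lt_trans _ _ (8%:E)); last by rewrite ltry.
  apply: le_trans (eseries_bound R a 8 a0 hsum).
  by apply: lee_nneseries => [k _ _|k _]; [exact: measure_ge0 | exact: hF].
have h0 := @lim_sup_set_cvg0 _ _ _ (@lebesgue_measure R) _ mF hfin.
exists (lim_sup_set F); split => //.
  rewrite /lim_sup_set; apply: bigcapT_measurable => n.
  by apply: bigcup_measurable => k _; exact: mF.
move=> x /= nP n _.
apply: boolp.contrapT => H; apply: nP => h01 hirr.
have hx : Xs R x by split.
have hj : forall j, (n <= j)%N -> ~ F j x by move=> j hj Fj; apply: H; exists j.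
have hA' : forall j, (n <= j)%N -> fdig R x j <= ((j.+1)%:R) ^+ 2.
  move=> j hjn.
  have [/andP[y0 y1] _] := iter_X R j x hx.
  have hv : vA j < iter j (@gauss R) x.
    rewrite ltNge; apply/negP => hle.
    by apply: (hj j hjn); left; case: (hEA j) => _ hc _; apply: hc => //; apply: ltW.
  rewrite /fdig digit_eq //.
  apply: le_trans (floor_le _) _.
  have e : ((j.+1)%:R : R) ^+ 2 = (vA j)^-1 by rewrite /vA invrK.
  rewrite e; apply: ltW; rewrite ltf_pV2 ?posrE //.
have hB' : forall j, (n <= j)%N -> Pi R x j <= 16 ^+ j.
  move=> j hjn.
  have [/andP[y0 y1] _] := iter_X R j x hx.
  rewrite leNgt; apply/negP => hlt.
  apply: (hj j hjn); right; case: (hEB j) => _ hc _; apply: hc => //; try apply: ltW => //.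
have [C [N hC]] := det R c x n hc0 hc1 hx hA' hB'.
split; last by exists C, N.
apply: (cvg0_bound R _ C N) => // m; exact: normr_ge0.
Qed.
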